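(* Let $\alpha=\alpha(0)$ be a graph function on a strongly connected digraph $G$, fix a fair infinite sequence of raising operations, and let $\alpha(t)$ and $r(t)$ be the resulting graph functions and raising vectors. Then the sequence $r(t)$ is (coordinatewise) non-decreasing and bounded above, and hence converges to a limit vector $r^*$ as $t\to\infty$.
   Context: $G$ is a strongly connected directed graph on vertex set $\{1,\dots,n\}$ (self-loops allowed); a graph function assigns a real weight $\alpha_{uv}$ to each edge. $\alpha_v^{\text{in}}=\max_{u:(u,v)\in G}\alpha_{uv}$, $\alpha_v^{\text{out}}=\max_{w:(v,w)\in G}\alpha_{vw}$, $\rho^R_v=\max\{0,\alpha_v^{\text{out}}-\alpha_v^{\text{in}}\}$. A raising operation at $v$: if $\rho^R_v>0$, add $\rho^R_v/2$ to each $\alpha_{uv}$ ($u\ne v$) and subtract $\rho^R_v/2$ from each $\alpha_{vw}$ ($w\ne v$), self-loop unchanged; otherwise do nothing. A sequence of operations is fair if every vertex occurs infinitely often. The raising vector is defined by $r(0)=0$ and, if the $t$-th operation is at vertex $v$, $r_v(t)=r_v(t-1)+\rho^R_v/2$ (with $\rho^R_v$ computed in $\alpha(t-1)$) and $r_u(t)=r_u(t-1)$ for $u\ne v$; thus $\alpha_{uv}(t)=\alpha_{uv}(0)+r_v(t)-r_u(t)$. *)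

(* Defs.v *)
From HB Require Import structures.
From mathcomp Require Import all_boot all_order all_algebra.
From mathcomp Require Import all_classical all_reals all_analysis.
Set Implicit Arguments. Unset Strict Implicit. Unset Printing Implicit Defensive.
Import Order.TTheory GRing.Theory Num.Theory.
Local Open Scope ring_scope.

Section Raising.
Variables (R : realType) (n : nat) (G : rel 'I_n).

(* a graph function: weight alpha u v on edge (u,v); values off edges are irrelevant *)
Definition graph_fun := 'I_n -> 'I_n -> R.

Definition strongly_connected := forall u v : 'I_n, connect G u v.

(* maximum of a finite nonempty list (0 on the empty list, which only happens
   in the degenerate edgeless one-vertex graph) *)
Definition seqmax (s : seq R) : R := foldr Num.max (head 0 s) s.

Definition alpha_in (a : graph_fun) (v : 'I_n) : R :=
  seqmax [seq a u v | u <- enum 'I_n & G u v].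
Definition alpha_out (a : graph_fun) (v : 'I_n) : R :=
  seqmax [seq a v w | w <- enum 'I_n & G v w].

Definition rhoR (a : graph_fun) (v : 'I_n) : R :=
  Num.max 0 (alpha_out a v - alpha_in a v).

Definition raise (a : graph_fun) (v : 'I_n) : graph_fun :=
  fun u w =>
    a u w + (if (w == v) && (u != v) then rhoR a v / 2 else 0)
          - (if (u == v) && (w != v) then rhoR a v / 2 else 0).

Definition fair (s : nat -> 'I_n) := forall (v : 'I_n) (N : nat), exists2 t, (N <= t)%N & s t = v.

(* alpha(t): the (t+1)-th operation is performed at vertex s t *)
Fixpoint alpha_seq (a0 : graph_fun) (s : nat -> 'I_n) (t : nat) : graph_fun :=
  match t with
  | 0 => a0
  | t'.+1 => raise (alpha_seq a0 s t') (s t')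
  end.

Fixpoint r_seq (a0 : graph_fun) (s : nat -> 'I_n) (t : nat) : 'I_n -> R :=
  match t with
  | 0 => fun _ => 0
  | t'.+1 => fun v => r_seq a0 s t' v +
       (if v == s t' then rhoR (alpha_seq a0 s t') v / 2 else 0)
  end.

End Raising.

(* Main.v *)
Require Import Defs.
From HB Require Import structures.
From mathcomp Require Import all_boot all_order all_algebra.
From mathcomp Require Import all_classical all_reals all_analysis.
From mathcomp Require Import ring lra zify.
Import Order.TTheory GRing.Theory Num.Theory numFieldNormedType.Exports.
Local Open Scope classical_set_scope.
Local Open Scope ring_scope.

Section Aux.
Variables (R : realType) (n : nat) (G : rel 'I_n) (a0 : graph_fun R n).

Lemma foldr_max_ge (s : seq R) x0 x : x \in s -> x <= foldr Num.max x0 s.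
Proof.
elim: s => //= y s IH; rewrite in_cons => /orP [/eqP ->|/IH h].
  by rewrite le_max lexx.
by rewrite le_max h orbT.
Qed.

Lemma foldr_max_mem (s : seq R) x0 : foldr Num.max x0 s \in x0 :: s.
Proof.
elim: s => /= [|y s IH]; first by rewrite mem_seq1.
rewrite !in_cons; case: (leP y (foldr Num.max x0 s)) => _.
  by move: IH; rewrite in_cons => /orP [->|->]; rewrite ?orbT.
by rewrite eqxx orbT.
Qed.

Lemma seqmax_ge (s : seq R) x : x \in s -> x <= seqmax s.
Proof. exact: foldr_max_ge. Qed.

Lemma seqmax_mem (s : seq R) : s != [::] -> seqmax s \in s.
Proof.
case: s => // y s _; have := foldr_max_mem (y :: s) y.
by rewrite /seqmax /= in_cons => /orP [/eqP ->|]; rewrite ?mem_head.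
Qed.

Definition pot (p : 'I_n -> R) : graph_fun R n := fun u w => a0 u w + p w - p u.

Lemma alpha_pot s t : alpha_seq G a0 s t = pot (r_seq G a0 s t).
Proof.
elim: t => [|t IH] /=.
  by apply/funext => u; apply/funext => w; rewrite /pot !subr0 addr0.
apply/funext => u; apply/funext => w; rewrite /raise IH /pot.
case: (eqVneq w (s t)) => [->|wn]; case: (eqVneq u (s t)) => [->|un] /=;
  rewrite ?eqxx ?(negbTE wn) ?(negbTE un) /=; lra.
Qed.


Definition walk (f : nat -> 'I_n) m := forall i, (i < m)%N -> G (f i) (f i.+1).
Definition wt (f : nat -> 'I_n) m : R := \sum_(0 <= i < m) a0 (f i) (f i.+1).

Lemma connect_walk u v : connect G u v ->
  exists f m, [/\ walk f m, f 0%N = u & f m = v].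
Proof.
move/connectP => [p pth ->].
exists (fun i => nth u (u :: p) i), (size p); split => //.
- move=> i ip; move/pathP: pth => /(_ u i ip) /=.
  by case: i ip.
- by rewrite -[size p]/((size (u :: p)).-1) nth_last.
Qed.

Lemma walk_cat {f m g m'} : walk f m -> walk g m' -> f m = g 0%N ->
  let h := fun i => if (i <= m)%N then f i else g (i - m)%N in
  [/\ walk h (m + m'), h 0%N = f 0%N, h (m + m')%N = g m' &
      wt h (m + m') = wt f m + wt g m'].
Proof.
move=> wf wg e h.
have hl j : (j <= m)%N -> h j = f j by rewrite /h => ->.
have hr j : (m <= j)%N -> h j = g (j - m)%N.
  rewrite /h => mj; case: ifP => // jm.
  have -> : j = m by lia.
  by rewrite subnn.
split.
- move=> i im; case: (ltnP i m) => [lt|ge].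
    by rewrite !hl //; [apply: wf | lia].
  rewrite !hr; try lia.
  have -> : (i.+1 - m = (i - m).+1)%N by lia.
  apply: wg; lia.
- by rewrite hl.
- by rewrite hr ?addKn //; lia.
- rewrite /wt (@big_cat_nat _ _ _ m 0 (m + m') _ _ (leq0n m) (leq_addr m' m)) /=; congr (_ + _).
    apply: eq_big_nat => i /andP [_ im].
    by rewrite !hl //; lia.
  rewrite -{1}[m]add0n big_addn addKn; apply: eq_big_nat => i /andP [_ im].
  rewrite !hr; try lia.
  by rewrite addnK -addSn addnK.
Qed.

Lemma pigeon (f : nat -> 'I_n) m : (n < m)%N ->
  exists i j, [/\ (i < j)%N, (j < m)%N & f i = f j].
Proof.
move=> nm; case: (pselect (exists i j, [/\ (i < j)%N, (j < m)%N & f i = f j])) => // H.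
exfalso; have inj : injective (fun i : 'I_m => f i).
  move=> i j e; apply/val_inj => /=.
  case: (ltngtP i j) => // [lt|lt]; exfalso; apply: H.
  - by exists i, j; split.
  - by exists j, i; split.
by have := leq_card _ inj; rewrite !card_ord; lia.
Qed.

Lemma cycle_split f m : (n < m)%N -> walk f m -> f m = f 0%N ->
  exists g1 m1 g2 m2, [/\ (0 < m1)%N, (0 < m2)%N, m = (m1 + m2)%N,
     [/\ walk g1 m1, g1 m1 = g1 0%N, walk g2 m2 & g2 m2 = g2 0%N] &
     wt f m = wt g1 m1 + wt g2 m2].
Proof.
move=> nm wf cf; have [i [j [ij jm fij]]] := pigeon f _ nm.
pose g1 k := f (i + k)%N; pose g2 k := if (k < i)%N then f k else f (k + (j - i))%N.
have g2S k : (k < i)%N -> g2 k.+1 = f k.+1.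
  move=> ki; rewrite /g2; case: ifP => // kk.
  have -> : k.+1 = i by lia.
  by rewrite subnKC ?fij //; lia.
exists g1, (j - i)%N, g2, (m - (j - i))%N; split; first 1 [lia | lia | lia].
- split.
  + by move=> k km; rewrite /g1 addnS; apply: wf; lia.
  + by rewrite /g1 addn0 subnKC ?fij //; lia.
  + move=> k km; case: (ltnP k i) => ki.
      by rewrite g2S // /g2 ki; apply: wf; lia.
    rewrite /g2 ltnNge ki /= ltnNge (leqW ki) /= addSn; apply: wf; lia.
  + rewrite /g2 ltnNge; have -> : (i <= m - (j - i))%N by lia.
    rewrite /= subnK; last lia.
    case: (posnP i) => [i0|ip]; first by rewrite i0 subn0 cf -fij i0.
    by rewrite cf.
- rewrite /wt (@big_cat_nat _ _ _ i 0 m) /=; [|lia|lia].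
  rewrite (@big_cat_nat _ _ _ j i m) /=; [|lia|lia].
  rewrite (@big_cat_nat _ _ _ i 0 (m - (j - i))) /=; [|lia|lia].
  have A1 : \sum_(0 <= k < i) a0 (f k) (f k.+1) = \sum_(0 <= k < i) a0 (g2 k) (g2 k.+1).
    apply: eq_big_nat => k /andP [_ ki].
    by rewrite g2S // /g2 ki.
  have A2 : \sum_(i <= k < j) a0 (f k) (f k.+1) = \sum_(0 <= k < j - i) a0 (g1 k) (g1 k.+1).
    rewrite -{1}[i]add0n big_addn; apply: eq_big_nat => k /andP [_ kji].
    by rewrite /g1 addnC addnS.
  have A3 : \sum_(j <= k < m) a0 (f k) (f k.+1) = \sum_(i <= k < m - (j - i)) a0 (g2 k) (g2 k.+1).
    have e : j = (i + (j - i))%N by lia.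
    rewrite {1}e big_addn; apply: eq_big_nat => k /andP [ik km].
    rewrite /g2 ltnNge ik /= ltnNge (leqW ik) /=.
    by rewrite addSn.
  rewrite A1 A2 A3; lra.
Qed.



Lemma argmax_fin (T : finType) (P : pred T) (F : T -> R) x0 : P x0 ->
  exists x, P x /\ forall y, P y -> F y <= F x.
Proof.
move=> Px0.
suff H : forall s : seq T, (exists2 x, x \in s & P x) ->
  exists x, P x /\ forall y, y \in s -> P y -> F y <= F x.
  have [|x [Px Hx]] := H (enum T); first by exists x0; rewrite ?mem_enum.
  by exists x; split => // y; apply: Hx; rewrite mem_enum.
elim => [[x]//|z s IH [x]]; rewrite in_cons => /orP [/eqP -> Pz|xs Px].
  case: (pselect (exists2 x, x \in s & P x)) => [/IH [w [Pw Hw]]|N].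
    case: (leP (F w) (F z)) => c.
      exists z; split => // y; rewrite in_cons => /orP [/eqP ->//|ys Py].
      exact: le_trans (Hw _ ys Py) c.
    exists w; split => // y; rewrite in_cons => /orP [/eqP -> _|ys Py].
      exact: ltW.
    exact: Hw.
  exists z; split => // y; rewrite in_cons => /orP [/eqP ->//|ys Py].
  by exfalso; apply: N; exists y.
have [w [Pw Hw]] := IH (ex_intro2 _ _ x xs Px).
case: (boolP (P z)) => Pz.
  case: (leP (F w) (F z)) => c.
    exists z; split => // y; rewrite in_cons => /orP [/eqP ->//|ys Py].
    exact: le_trans (Hw _ ys Py) c.
  exists w; split => // y; rewrite in_cons => /orP [/eqP -> _|ys Py].
    exact: ltW.
  exact: Hw.
exists w; split => // y; rewrite in_cons => /orP [/eqP ->|ys Py].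
  by rewrite (negbTE Pz).
exact: Hw.
Qed.

Definition closedw f m := walk f m /\ f m = f 0%N.

Lemma short_cycle f m : (0 < m)%N -> closedw f m ->
  exists g k, [/\ (0 < k)%N, (k <= n)%N & closedw g k].
Proof.
move=> mp cw; suff H : forall N m f, (m <= N)%N -> (0 < m)%N -> closedw f m ->
  exists g k, [/\ (0 < k)%N, (k <= n)%N & closedw g k] by exact: (H m m f).
clear f m mp cw; elim => [|N IH] m f mN mp [wf cf]; first lia.
case: (leqP m n) => mn; first by exists f, m.
have [g1 [m1 [g2 [m2 [m1p m2p e [w1 c1 w2 c2] _]]]]] := cycle_split f m mn wf cf.
by apply: (IH m1 g1) => //; lia.
Qed.

Lemma wt0 f : wt f 0 = 0.
Proof. by rewrite /wt big_geq. Qed.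

Lemma max_cycle : (exists f m, (0 < m)%N /\ closedw f m) ->
  exists mu f0 m0, [/\ (0 < m0)%N, closedw f0 m0, wt f0 m0 = m0%:R * mu &
    forall f m, closedw f m -> wt f m <= m%:R * mu].
Proof.
move=> [f [m [mp cw]]].
have [g [k [kp kn [wg cg]]]] := short_cycle f m mp cw.
pose W := ('I_n.+1 * {ffun 'I_n.+1 -> 'I_n})%type.
pose dec (x : W) : nat -> 'I_n := fun i => x.2 (inord i).
pose len (x : W) : nat := val x.1.
pose P (x : W) : bool := [&& (0 < len x)%N,
   [forall i : 'I_n, (i < len x)%N ==> G (dec x i) (dec x i.+1)] &
   dec x (len x) == dec x 0%N].
pose F (x : W) : R := wt (dec x) (len x) / (len x)%:R.
have encP h j : (0 < j)%N -> (j <= n)%N -> closedw h j ->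
    exists x, [/\ P x, len x = j & forall i, (i <= n)%N -> dec x i = h i].
  move=> jp jn [wh ch].
  exists (inord j, [ffun i : 'I_n.+1 => h i]).
  have dE i : (i <= n)%N -> dec (inord j, [ffun i : 'I_n.+1 => h i]) i = h i.
    by move=> iN; rewrite /dec /= ffunE inordK.
  have lE : len (inord j, [ffun i : 'I_n.+1 => h i]) = j by rewrite /len /= inordK.
  split => //; rewrite /P lE jp /= dE // dE // ch eqxx andbT.
  apply/forallP => i; apply/implyP => ij.
  by rewrite !dE; [apply: wh | lia | lia].
have [x0 [Px0 _ _]] := encP g k kp kn (conj wg cg).
have [x [Px Hx]] := @argmax_fin W P F x0 Px0.
have wtE x' : P x' -> closedw (dec x') (len x').
  move=> /and3P [_ /forallP H /eqP c]; split => // i il.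
  have h1 : (len x' <= n)%N by rewrite /len; exact: (leq_ord x'.1).
  have iN : (i < n)%N by lia.
  by have := H (Ordinal iN); move/implyP/(_ il).
have lp : (0 < len x)%N by case/and3P: Px.
exists (F x), (dec x), (len x); split => //; first exact: wtE.
  by rewrite /F mulrC divfK // pnatr_eq0 -lt0n.
suff H : forall N m f, (m <= N)%N -> closedw f m -> wt f m <= m%:R * F x.
  by move=> f' m'; apply: H.
elim => [|N IH] m' f' mN [wf cf].
  have -> : m' = 0%N by lia.
  by rewrite wt0 mul0r.
case: (posnP m') => [->|m'p]; first by rewrite wt0 mul0r.
case: (leqP m' n) => mn.
  have [y [Py ly dy]] := encP f' m' m'p mn (conj wf cf).
  have Fy := Hx y Py.
  have -> : wt f' m' = wt (dec y) (len y).
    by rewrite ly; apply: eq_big_nat => i /andP [_ im]; rewrite !dy //; lia.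
  rewrite -ler_pdivrMl ?ltr0n ?ly //; rewrite mulrC -ly; exact: Fy.
have [g1 [m1 [g2 [m2 [m1p m2p e [w1 c1 w2 c2] ->]]]]] := cycle_split f' m' mn wf cf.
rewrite e natrD mulrDl; apply: lerD; apply: IH; try lia; by split.
Qed.


Lemma wtS f m : wt f m.+1 = wt f m + a0 (f m) (f m.+1).
Proof. by rewrite /wt big_nat_recr. Qed.

Lemma walkS f m : walk f m.+1 -> walk f m.
Proof. by move=> w i im; apply: w; lia. Qed.

Definition edgew (u v : 'I_n) : nat -> 'I_n := fun i => if i == 0%N then u else v.

Lemma edgewP {u v} : G u v -> walk (edgew u v) 1 /\ wt (edgew u v) 1 = a0 u v.
Proof.
move=> uv; split; first by move=> i; case: i.
by rewrite /wt big_nat1.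
Qed.

Lemma in_edge (SC : strongly_connected G) v y : G v y -> exists x, G x v.
Proof.
move=> vy; have [h [m [wh h0 hm]]] := connect_walk _ _ (SC y v).
case: m wh hm => [|m] wh hm; first by exists v; rewrite -{2}hm h0.
by exists (h m); rewrite -hm; apply: wh.
Qed.

Lemma super (SC : strongly_connected G) : exists phi : 'I_n -> R,
  (forall v, 0 <= phi v) /\
  forall v, (exists y, G v y) -> exists x, G x v /\
     forall y, G v y -> pot phi v y <= pot phi x v.
Proof.
case: (pselect (exists u w, G u w)) => [[u [w uw]]|none]; last first.
  exists (fun _ => 0); split => // v [y vy]; exfalso; apply: none; by exists v, y.
have [mu [f0 [m0 [m0p [wf0 cf0] wt0E Hmu]]]] : exists mu f0 m0, [/\ (0 < m0)%N, closedw f0 m0,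
    wt f0 m0 = m0%:R * mu & forall f m, closedw f m -> wt f m <= m%:R * mu].
  apply: max_cycle.
  have [h [m [wh h0 hm]]] := connect_walk _ _ (SC w u).
  have [we _] := edgewP uw.
  have [wc c0 cm _] := walk_cat we wh (esym h0).
  exists (fun i => if (i <= 1)%N then edgew u w i else h (i - 1)%N), (1 + m)%N.
  split => //; split; first exact: wc.
  by rewrite cm c0 hm.
pose k := f0 0%N.
pose cwt f m := wt f m - m%:R * mu.
pose E v := [set x | exists f m, [/\ walk f m, f 0%N = k, f m = v & x = cwt f m]].
pose d v := sup (E v).
have Ene v : E v !=set0.
  have [h [m [wh h0 hm]]] := connect_walk _ _ (SC k v).
  by exists (cwt h m), h, m.
have Eub v : has_ubound (E v).
  have [g [m' [wg g0 gm]]] := connect_walk _ _ (SC v k).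
  exists (- cwt g m') => x [f [m [wf f0k fm ->]]].
  have [wc c0 cm cw] := walk_cat wf wg (etrans fm (esym g0)).
  have := Hmu _ _ (conj wc (etrans cm (etrans gm (etrans (esym f0k) (esym c0))))).
  rewrite cw natrD mulrDl /cwt => H; lra.
have Ehs v : has_sup (E v) by split.
have F3 x v : G x v -> d x + (a0 x v - mu) <= d v.
  move=> xv; rewrite -lerBrDr; apply: ge_sup => // y [f [m [wf f0k fm ->]]].
  rewrite lerBrDr.
  have [we wte] := edgewP xv.
  have [wc c0 cm cw] := walk_cat wf we fm.
  apply: sup_upper_bound => //.
  exists (fun i => if (i <= m)%N then f i else edgew x v (i - m)), (m + 1)%N.
  split; [exact: wc | by rewrite c0 | by rewrite cm |].
  by rewrite /cwt cw wte natrD mulrDl mul1r; ring.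
have F4 v x0 : G x0 v -> exists x, G x v /\ d v <= d x + (a0 x v - mu).
  move=> x0v.
  have [x [xv Hx]] := @argmax_fin _ (fun x => G x v) (fun x => d x + (a0 x v - mu)) x0 x0v.
  exists x; split => //; apply: ge_sup => // y [f [m [wf f0k fm ->]]].
  case: m wf fm => [|m] wf fm.
    rewrite /cwt wt0 mul0r subr0.
    have ek : v = k by rewrite -fm f0k.
    case: m0 m0p wf0 cf0 wt0E => // m1 _ wf0 cf0 wt0E.
    have x1k : G (f0 m1) (f0 m1.+1) by apply: wf0.
    apply: le_trans (Hx (f0 m1) _); last by rewrite ek; move: x1k; rewrite cf0.
    have H1 : cwt f0 m1 <= d (f0 m1).
      apply: sup_upper_bound => //; exists f0, m1; split => //; exact: walkS.
    have H2 := wtS f0 m1; rewrite cf0 in H2.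
    move: wt0E H1; rewrite H2 /cwt ek /k -[m1.+1]addn1 natrD; lra.
  have xv' : G (f m) v by rewrite -fm; apply: wf.
  apply: le_trans (Hx _ xv'); rewrite /cwt wtS fm.
  have : cwt f m <= d (f m).
    apply: sup_upper_bound => //; exists f, m; split => //; exact: walkS.
  rewrite /cwt -[m.+1]addn1 natrD; lra.
pose K := \sum_v `|d v|.
exists (fun v => - d v + K); split.
  move=> v; rewrite /K (bigD1 v) //=.
  have := ler_norm (d v).
  have : 0 <= \sum_(i | i != v) `|d i| by apply: sumr_ge0 => i _; exact: normr_ge0.
  lra.
move=> v [y vy]; have [x0 x0v] := in_edge SC _ _ vy.
have [x [xv Hx]] := F4 v x0 x0v.
exists x; split => // y' vy'; rewrite /pot.
have := F3 _ _ vy'; lra.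
Qed.


Lemma out_edge (SC : strongly_connected G) v x : G x v -> exists y, G v y.
Proof.
move=> xv; have [h [m [wh h0 hm]]] := connect_walk _ _ (SC v x).
case: m wh hm => [|m] wh hm; first by exists v; rewrite -{1}h0 hm.
by exists (h 1%N); rewrite -h0; apply: wh.
Qed.

Lemma rho_bound (SC : strongly_connected G) (phi : 'I_n -> R)
  (Hphi : forall v, (exists y, G v y) -> exists x, G x v /\
     forall y, G v y -> pot phi v y <= pot phi x v)
  (p : 'I_n -> R) v : (forall u, p u <= phi u) ->
  p v + rhoR G (pot p) v / 2 <= phi v.
Proof.
move=> pphi; rewrite /rhoR.
case: (pselect (exists y, G v y)) => [ex|nex]; last first.
  have Ein : [seq u <- enum 'I_n | G u v] = [::].
    apply/eqP; rewrite -[_ == _]negbK -has_filter; apply/hasPn => x _.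
    apply/negP => xv; apply: nex; exact: out_edge xv.
  have Eout : [seq w <- enum 'I_n | G v w] = [::].
    apply/eqP; rewrite -[_ == _]negbK -has_filter; apply/hasPn => y _.
    by apply/negP => vy; apply: nex; exists y.
  rewrite /alpha_out /alpha_in Ein Eout /seqmax /= subrr maxxx mul0r addr0.
  exact: pphi.
have [x [xv Hx]] := Hphi v ex.
have ne : [seq pot p v w | w <- enum 'I_n & G v w] != [::].
  case: ex => y vy; apply/eqP => E.
  have : pot p v y \in [seq pot p v w | w <- enum 'I_n & G v w].
    by apply: map_f; rewrite mem_filter vy mem_enum.
  by rewrite E.
have /mapP [y] := seqmax_mem _ ne; rewrite mem_filter => /andP [vy _] outE.
have inG : pot p x v <= alpha_in G (pot p) v.
  by apply: seqmax_ge; apply: map_f; rewrite mem_filter xv mem_enum.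
rewrite -/(alpha_out G (pot p) v) in outE.
have := Hx y vy; have := pphi v; have := pphi x; have := pphi y.
rewrite /pot in outE inG * => h1 h2 h3 h4.
rewrite outE; case: (leP 0 _) => _; lra.
Qed.

End Aux.

Theorem lemma1 (R : realType) (n : nat) (G : rel 'I_n)
  (a0 : graph_fun R n) (s : nat -> 'I_n) :
  strongly_connected G -> fair s ->
  (forall (t : nat) (v : 'I_n), r_seq G a0 s t v <= r_seq G a0 s t.+1 v) /\
  (exists B : R, forall (t : nat) (v : 'I_n), r_seq G a0 s t v <= B) /\
  (exists rstar : 'I_n -> R, forall v : 'I_n,
      (fun t => r_seq G a0 s t v) @ \oo --> rstar v).
Proof.
move=> SC _.
have mono : forall (t : nat) (v : 'I_n), r_seq G a0 s t v <= r_seq G a0 s t.+1 v.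
  move=> t v /=; rewrite lerDl; case: ifP => _ //.
  by apply: divr_ge0 => //; rewrite le_max lexx.
have [phi [phi0 Hphi]] := @super R n G a0 SC.
have bnd : forall t v, r_seq G a0 s t v <= phi v.
  elim => [|t IH] v /=; first exact: phi0.
  case: (eqVneq v (s t)) => [->|ne]; last by rewrite addr0; exact: IH.
  rewrite (@alpha_pot R n G a0 s t); exact: (@rho_bound R n G a0 SC phi Hphi).
pose B := \sum_v `|phi v|.
have bB : forall t v, r_seq G a0 s t v <= B.
  move=> t v; apply: le_trans (bnd t v) _; rewrite /B (bigD1 v) //=.
  have := ler_norm (phi v).
  have : 0 <= \sum_(i | i != v) `|phi i| by apply: sumr_ge0 => i _; exact: normr_ge0.
  lra.
split => //; split; first by exists B.
exists (fun v => sup (range (fun t => r_seq G a0 s t v))) => v.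
apply: nondecreasing_cvgn.
  by apply/nondecreasing_seqP => t; exact: mono.
by exists B => _ [t _ <-].
Qed.
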